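(* Let $i\in\{1,2,3,4\}$ and let $M\in\mathcal{X}_i$. Then either $M$ has a minor isomorphic to some matroid in $\mathcal{N}_i$, or $M\in\mathcal{X}_{i+1}$.
   Context: A partial field is a pair $(R,G)$, $R$ a commutative ring with unity, $G$ a subgroup of its units containing $-1$; a matroid is representable over it if it is isomorphic to $M[A]$ for a matrix $A$ with entries in $G\cup\{0\}$ whose non-zero square subdeterminants all lie in $G$ (for an $X\times Y$ matrix $A$, $M[A]$ is the matroid on $X\cup Y$ with bases $X\triangle Z$ where $|X\cap Z|=|Y\cap Z|$ and $\det A[X\cap Z,Y\cap Z]\neq0$). The Hydra partial fields are: $\mathbb{H}_1=\mathrm{GF}(5)$; $\mathbb{H}_2=(\mathbb{Z}[i,1/2],\langle i,1-i\rangle)$ with $i^2=-1$; $\mathbb{H}_3=(\mathbb{Q}(\alpha),\langle -1,\alpha,1-\alpha,\alpha^2-\alpha+1\rangle)$; $\mathbb{H}_4=(\mathbb{Q}(\alpha,\beta),\langle -1,\alpha,\beta,\alpha-1,\beta-1,\alpha\beta-1,\alpha+\beta-2\alpha\beta\rangle)$; $\mathbb{H}_5=(\mathbb{Q}(\alpha,\beta,\gamma),\langle -1,\alpha,\beta,\gamma,\alpha-1,\beta-1,\gamma-1,\alpha-\gamma,\gamma-\alpha\beta,(1-\gamma)-(1-\alpha)\beta\rangle)$, with $\alpha,\beta,\gamma$ indeterminates and $\langle\cdot\rangle$ denoting the generated multiplicative group. For $i\in\{1,\dots,5\}$, $\mathcal{X}_i$ is the set of excluded minors (matroids not $\mathbb{H}_i$-representable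 all of whose proper minors are) for the class of $\mathbb{H}_i$-representable matroids. For $i\in\{1,2,3,4\}$, $\mathcal{N}_i$ is the set of matroids in $\mathcal{X}_{i+1}$ that are $\mathbb{H}_i$-representable. *)

(* Defs.v *)
From HB Require Import structures.
From mathcomp Require Import all_boot all_order all_algebra all_field.
From mathcomp Require Import fraction.
Set Implicit Arguments. Unset Strict Implicit. Unset Printing Implicit Defensive.
Import Order.TTheory GRing.Theory Num.Theory.
Local Open Scope ring_scope.

Record setsys (T : finType) := SetSys { ground : {set T}; bases : {set {set T}} }.

Definition is_matroid (T : finType) (M : setsys T) : Prop :=
  [/\ bases M != set0,
      (forall B, B \in bases M -> B \subset ground M) &
      (forall B1 B2, B1 \in bases M -> B2 \in bases M ->
        forall x, x \in B1 :\: B2 ->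
          exists2 y, y \in B2 :\: B1 & (y |: (B1 :\ x)) \in bases M)].

Definition rank (T : finType) (M : setsys T) (S : {set T}) : nat :=
  (\max_(B in bases M) #|B :&: S|)%N.

(** The minor M / C \ D, on ground set E - (C ∪ D), with rank function
    r'(X) = r(X ∪ C) - r(C); its bases are the X with r'(X) = |X| = r'(E'). *)
Definition minor (T : finType) (M : setsys T) (C D : {set T}) : setsys T :=
  SetSys (ground M :\: (C :|: D))
    [set B : {set T} | [&& B \subset ground M :\: (C :|: D),
                          rank M (B :|: C) == (#|B| + rank M C)%N &
                          rank M (B :|: C) == rank M (ground M :\: D)]].

Definition minor_data (T : finType) (M : setsys T) (C D : {set T}) : Prop :=
  [/\ C \subset ground M, D \subset ground M & [disjoint C & D]].

Definition isomorphic (T1 T2 : finType) (M1 : setsys T1) (M2 : setsys T2) : Prop :=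
  exists f : T1 -> T2,
    [/\ {in ground M1 &, injective f},
        f @: ground M1 = ground M2 &
        forall Z : {set T1}, Z \subset ground M1 ->
          (Z \in bases M1) = (f @: Z \in bases M2)].

Definition has_minor_iso (T1 T2 : finType) (M : setsys T1) (N : setsys T2) : Prop :=
  exists C D : {set T1}, minor_data M C D /\ isomorphic (minor M C D) N.

Record partial_field := PartialField {
  pf_ring : comUnitRingType;
  pf_group : pf_ring -> Prop }.

(** Subdeterminant det A[r, c] (rows/columns in the order of enum; only
    meaningful when #|r| = #|c|; the empty subdeterminant is 1). *)
Definition subdet (R : comUnitRingType) (X Y : finType) (A : X -> Y -> R)
    (r : {set X}) (c : {set Y}) : R :=
  let A' (ox : option X) (oy : option Y) :=
    match ox, oy with Some x, Some y => A x y | _, _ => 0 end in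
  let rs := [seq Some x | x <- enum r] in
  let cs := [seq Some y | y <- enum c] in
  \det (\matrix_(i < #|r|, j < #|r|) A' (nth None rs i) (nth None cs j)).

Definition rows_of (X Y : finType) (Z : {set (X + Y)%type}) : {set X} :=
  [set x | inl x \in Z].
Definition cols_of (X Y : finType) (Z : {set (X + Y)%type}) : {set Y} :=
  [set y | inr y \in Z].

Definition symdiff (T : finType) (A B : {set T}) : {set T} := (A :\: B) :|: (B :\: A).

Definition matroid_of_matrix (R : comUnitRingType) (X Y : finType)
    (A : X -> Y -> R) : setsys (X + Y)%type :=
  SetSys [set: (X + Y)%type]
    [set B : {set (X + Y)%type} | [exists Z : {set (X + Y)%type},
        [&& B == symdiff [set inl x | x : X] Z,
            #|rows_of Z| == #|cols_of Z| &
            subdet A (rows_of Z) (cols_of Z) != 0]]].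

Definition is_pf_matrix (P : partial_field) (X Y : finType)
    (A : X -> Y -> pf_ring P) : Prop :=
  (forall x y, A x y = 0 \/ @pf_group P (A x y)) /\
  (forall (r : {set X}) (c : {set Y}), #|r| = #|c| ->
     subdet A r c != 0 -> @pf_group P (subdet A r c)).

Definition representable (P : partial_field) (T : finType) (M : setsys T) : Prop :=
  exists (X Y : finType) (A : X -> Y -> pf_ring P),
    is_pf_matrix A /\ isomorphic (matroid_of_matrix A) M.

Definition excluded_minor (P : partial_field) (T : finType) (M : setsys T) : Prop :=
  [/\ is_matroid M, ~ representable P M &
      forall C D : {set T}, minor_data M C D -> C :|: D != set0 ->
        representable P (minor M C D)].

Definition gen_group (R : comUnitRingType) (gs : seq R) : R -> Prop :=
  fun x => exists es : seq int, size es = size gs /\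
                 x = \prod_(j < size gs) gs`_j ^ es`_j.

Definition H1 : partial_field := @PartialField 'F_5 (fun x => x != 0).

(** H2 = (Z[i,1/2], <i, 1-i>); realised inside algC. *)
Definition H2 : partial_field :=
  @PartialField algC (gen_group [:: 'i; 1 - 'i]).

Definition Q1 := {fraction {poly rat}}.
Definition Q2 := {fraction {poly {poly rat}}}.
Definition Q3 := {fraction {poly {poly {poly rat}}}}.

Definition a1 : Q1 := tofrac 'X.
Definition a2 : Q2 := tofrac ('X%:P).
Definition b2 : Q2 := tofrac 'X.
Definition a3 : Q3 := tofrac ('X%:P%:P).
Definition b3 : Q3 := tofrac ('X%:P).
Definition c3 : Q3 := tofrac 'X.

Definition H3 : partial_field :=
  @PartialField Q1 (gen_group [:: -1; a1; 1 - a1; a1 ^+ 2 - a1 + 1]).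

Definition H4 : partial_field :=
  @PartialField Q2 (gen_group [:: -1; a2; b2; a2 - 1; b2 - 1; a2 * b2 - 1;
                                  a2 + b2 - 2 * a2 * b2]).

Definition H5 : partial_field :=
  @PartialField Q3 (gen_group [:: -1; a3; b3; c3; a3 - 1; b3 - 1; c3 - 1;
                                  a3 - c3; c3 - a3 * b3;
                                  (1 - c3) - (1 - a3) * b3]).

Definition Hydra (i : nat) : partial_field :=
  match i with
  | 1 => H1 | 2 => H2 | 3 => H3 | 4 => H4 | _ => H5
  end.

(** N_i: matroids in X_{i+1} that are H_i-representable. *)
Definition in_N (i : nat) (T : finType) (N : setsys T) : Prop :=
  excluded_minor (Hydra i.+1) N /\ representable (Hydra i) N.

(* Main.v *)
Require Import Defs.
From mathcomp Require Import all_boot all_algebra all_field fraction.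
From mathcomp Require Import ring zify.
From Stdlib Require Import Classical ClassicalEpsilon.
Set Implicit Arguments. Unset Strict Implicit. Unset Printing Implicit Defensive.


Section Matroid.
Variable T : finType.
Implicit Types (M : setsys T) (S X Y I J B : {set T}).

Definition indep M I := exists2 B, B \in bases M & I \subset B.

Lemma rank_ge M B S : B \in bases M -> #|B :&: S| <= rank M S.
Proof. by move=> HB; rewrite /rank; apply: (@leq_bigmax_cond _ (fun B => B \in bases M) (fun B => #|B :&: S|) _ HB). Qed.

Lemma rank_wit M S : bases M != set0 -> exists2 B, B \in bases M & rank M S = #|B :&: S|.
Proof.
move=> Hne; rewrite /rank.
have := @eq_bigmax_cond _ (mem (bases M)) (fun B => #|B :&: S|).
by rewrite card_gt0 => /(_ Hne) [B HB ->]; exists B.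
Qed.

Lemma rank_le_card M S : rank M S <= #|S|.
Proof. by apply/bigmax_leqP => B _; apply: subset_leq_card; apply: subsetIr. Qed.

Lemma rank_mono M X Y : X \subset Y -> rank M X <= rank M Y.
Proof.
move=> sXY; apply/bigmax_leqP => B HB; apply: leq_trans (rank_ge Y HB).
by apply: subset_leq_card; apply: setIS.
Qed.

Lemma indep_sub M I J : indep M I -> J \subset I -> indep M J.
Proof. by case=> B HB sIB sJI; exists B => //; apply: subset_trans sIB. Qed.

Lemma indep_le_rank M I S : indep M I -> I \subset S -> #|I| <= rank M S.
Proof.
case=> B HB sIB sIS; apply: leq_trans (rank_ge S HB).
by apply: subset_leq_card; rewrite subsetI sIB.
Qed.

Lemma bases_card M : is_matroid M -> forall B1 B2, B1 \in bases M -> B2 \in bases M -> #|B1| = #|B2|.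
Proof.
case=> _ _ Hex.
suff H : forall n B1 B2, #|B1 :\: B2| = n -> B1 \in bases M -> B2 \in bases M -> #|B1| = #|B2|.
  by move=> B1 B2; apply: H.
elim=> [|n IH] B1 B2 Hn H1 H2.
- have s12 : B1 \subset B2 by rewrite -setD_eq0 -cards_eq0 Hn.
  have s21 : B2 \subset B1.
    apply/subsetP=> y yB2; apply/negPn/negP=> yB1.
    have yD : y \in B2 :\: B1 by rewrite inE yB1 yB2.
    have [z] := Hex B2 B1 H2 H1 y yD.
    rewrite inE => /andP[zB2 zB1] _.
    by move/subsetP: s12 => /(_ z zB1); rewrite (negbTE zB2).
  by apply/eqP; rewrite eqn_leq !subset_leq_card.
- have : B1 :\: B2 != set0 by rewrite -card_gt0 Hn.
  case/set0Pn=> x xD.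
  have [y yD HB'] := Hex B1 B2 H1 H2 x xD.
  move: xD yD; rewrite !inE => /andP[xB2 xB1] /andP[yB1 yB2].
  have E1 : (y |: (B1 :\ x)) :\: B2 = (B1 :\: B2) :\ x.
    apply/setP=> z; rewrite !inE; case: (z =P y) => [->|_]; first by rewrite yB2 andbF.
    by case: (z \in B2); case: (z == x); case: (z \in B1).
  have Hn' : #|(y |: (B1 :\ x)) :\: B2| = n.
    rewrite E1; move: (cardsD1 x (B1 :\: B2)); rewrite inE xB2 xB1 Hn /=; lia.
  rewrite -(IH _ _ Hn' HB' H2) cardsU1 !inE (negbTE yB1) andbF /=.
  by rewrite (cardsD1 x B1) xB1.
Qed.

Lemma augment M I J : is_matroid M -> indep M I -> indep M J -> #|I| < #|J| ->
  exists2 x, x \in J :\: I & indep M (x |: I).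
Proof.
move=> HM [B10 HB10 sIB10] [B20 HB20 sJB20] ltIJ.
case: (HM) => Hne Hsub Hex.
apply: NNPP => Hno.
have Hno' : forall x, x \in J :\: I -> ~ indep M (x |: I) by move=> x xD Hi; apply: Hno; exists x.
suff H : forall n B1 B2, #|B2 :\: (J :|: B1)| = n -> B1 \in bases M -> B2 \in bases M ->
   I \subset B1 -> J \subset B2 -> False by exact: (H _ B10 B20 erefl HB10 HB20 sIB10 sJB20).
elim=> [|n IH] B1 B2 Hn H1 H2 sIB1 sJB2; last first.
- have : B2 :\: (J :|: B1) != set0 by rewrite -card_gt0 Hn.
  case/set0Pn=> x; rewrite !inE negb_or => /andP[/andP[xJ xB1] xB2].
  have xD : x \in B2 :\: B1 by rewrite inE xB1 xB2.
  have [y yD HB'] := Hex B2 B1 H2 H1 x xD.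
  move: yD; rewrite inE => /andP[yB2 yB1].
  apply: (IH B1 (y |: (B2 :\ x))) => //.
  + have E1 : (y |: (B2 :\ x)) :\: (J :|: B1) = (B2 :\: (J :|: B1)) :\ x.
      apply/setP=> z; rewrite !inE; case: (z =P y) => [->|_]; first by rewrite yB1 orbT /= andbF.
      by case: (z \in J); case: (z == x); case: (z \in B1); case: (z \in B2).
    rewrite E1; move: (cardsD1 x (B2 :\: (J :|: B1))); rewrite !inE (negbTE xJ) (negbTE xB1) xB2 Hn /= add1n; by case.
  + apply/subsetP=> z zJ; rewrite !inE (subsetP sJB2 z zJ) andbT.
    by apply/orP; right; apply/eqP=> zx; move: xJ; rewrite -zx zJ.
- have K : B2 \subset J :|: B1 by rewrite -setD_eq0 -cards_eq0 Hn.
  have h1 : forall x, x \in J :\: I -> x \notin B1.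
    move=> x xD; apply/negP=> xB1; apply: (Hno' x xD); exists B1 => //.
    by rewrite subUset sub1set xB1 sIB1.
  have h2 : B1 :\: B2 \subset I :\: J.
    apply/subsetP=> z; rewrite !inE => /andP[zB2 zB1].
    have zJ : z \notin J by apply/negP=> zJ; move: zB2; rewrite (subsetP sJB2 z zJ).
    rewrite zJ /=; apply/negPn/negP=> zI.
    have zD : z \in B1 :\: B2 by rewrite inE zB2 zB1.
    have [y yD HB'] := Hex B1 B2 H1 H2 z zD.
    move: yD; rewrite inE => /andP[yB1 yB2].
    have yJ : y \in J by move: (subsetP K y yB2); rewrite inE (negbTE yB1) orbF.
    have yI : y \notin I by apply/negP=> yI; move: yB1; rewrite (subsetP sIB1 y yI).
    apply: (Hno' y); first by rewrite inE yI yJ.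
    exists (y |: (B1 :\ z)) => //.
    apply/subsetP=> w; rewrite !inE => /orP[->//|wI]; rewrite (subsetP sIB1 w wI) andbT.
    by apply/orP; right; apply/eqP=> wz; move: zI; rewrite -wz wI.
  have h3 : B2 :\: B1 \subset J :\: I.
    apply/subsetP=> y; rewrite !inE => /andP[yB1 yB2].
    have yJ : y \in J by move: (subsetP K y yB2); rewrite inE (negbTE yB1) orbF.
    have yI : y \notin I by apply/negP=> yI; move: yB1; rewrite (subsetP sIB1 y yI).
    by rewrite yI yJ.
  have h4 : J :\: I \subset B2 :\: B1.
    apply/subsetP=> y yD; rewrite inE (h1 y yD).
    by move: yD; rewrite inE => /andP[_ yJ]; rewrite (subsetP sJB2 y yJ).
  have c1 := subset_leq_card h2.
  have c2 := subset_leq_card h3.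
  have c3 := subset_leq_card h4.
  have e12 := bases_card HM H1 H2.
  have d1 := cardsID B2 B1; have d2 := cardsID B1 B2; have d3 := cardsID J I; have d4 := cardsID I J.
  rewrite (setIC B2 B1) in d2; rewrite (setIC J I) in d4.
  move: c1 c2 c3 e12 d1 d2 d3 d4 ltIJ.
  move: #|B1 :\: B2| #|I :\: J| #|B2 :\: B1| #|J :\: I| #|B1| #|B2| #|I| #|J| #|B1 :&: B2| #|I :&: J|.
  clear; lia.
Qed.

Lemma extend M I S : is_matroid M -> indep M I -> I \subset S ->
  exists J, [/\ I \subset J, J \subset S, indep M J & #|J| = rank M S].
Proof.
move=> HM; case: (HM) => Hne _ _.
have [Bs HBs eBs] := rank_wit S Hne.
have iW : indep M (Bs :&: S) by exists Bs => //; apply: subsetIl.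
move Hk: (rank M S - #|I|) => k.
elim: k I Hk => [|k IH] I Hk iI sIS.
- exists I; split=> //; apply/eqP; rewrite eqn_leq indep_le_rank //=; lia.
- have lt : #|I| < #|Bs :&: S| by rewrite -eBs; lia.
  have [x xD ixI] := augment HM iI iW lt.
  move: xD; rewrite !inE => /andP[xI /andP[_ xS]].
  have sxS : x |: I \subset S by rewrite subUset sub1set xS sIS.
  have Hk' : rank M S - #|x |: I| = k by rewrite cardsU1 xI; lia.
  have [J [sJ1 sJ2 iJ cJ]] := IH (x |: I) Hk' ixI sxS.
  exists J; split=> //; apply: subset_trans sJ1; apply: subsetUr.
Qed.

Lemma indep0 M : is_matroid M -> indep M set0.
Proof. by case=> Hne _ _; case/set0Pn: Hne => B HB; exists B => //; apply: sub0set. Qed.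

Lemma rank_submod M X Y : is_matroid M ->
  rank M (X :|: Y) + rank M (X :&: Y) <= rank M X + rank M Y.
Proof.
move=> HM.
have [J0 [_ sJ0 iJ0 cJ0]] := extend HM (indep0 HM) (sub0set (X :&: Y)).
have sJ0' : J0 \subset X :|: Y.
  by apply: subset_trans sJ0 (subset_trans (subsetIl X Y) (subsetUl X Y)).
have [J [sJ0J sJ iJ cJ]] := extend HM iJ0 sJ0'.
have cX := indep_le_rank (indep_sub iJ (subsetIl J X)) (subsetIr J X).
have cY := indep_le_rank (indep_sub iJ (subsetIl J Y)) (subsetIr J Y).
have eJ : (J :&: X) :|: (J :&: Y) = J by rewrite -setIUr; apply/setIidPl.
have sI : J0 \subset (J :&: X) :&: (J :&: Y) by rewrite setIACA setIid subsetI sJ0J sJ0.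
have c := cardsUI (J :&: X) (J :&: Y); rewrite eJ in c.
have := subset_leq_card sI; lia.
Qed.
End Matroid.


Lemma setU1_same (T : finType) (x : T) (A : {set T}) : x \in A -> x |: A = A.
Proof. by move=> xA; apply/setUidPr; rewrite sub1set. Qed.

Section RankFn.
Variable T : finType.
Variable rho : {set T} -> nat.
Variable E : {set T}.
Implicit Types (S X Y I J B A : {set T}).
Hypothesis R1 : forall X, rho X <= #|X|.
Hypothesis R2 : forall X Y, X \subset Y -> rho X <= rho Y.
Hypothesis R3 : forall X Y, rho (X :|: Y) + rho (X :&: Y) <= rho X + rho Y.

Definition rindep I := rho I == #|I|.

Lemma rho0 : rho set0 = 0.
Proof. by have := R1 set0; rewrite cards0; case: (rho set0). Qed.

Lemma rindep_sub I J : rindep I -> J \subset I -> rindep J.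
Proof.
move=> /eqP HI sJI; apply/eqP.
have h := R3 J (I :\: J).
have eU : J :|: (I :\: J) = I.
  apply/setP=> z; rewrite !inE; case zJ: (z \in J) => /=; last by [].
  by rewrite (subsetP sJI z zJ).
have eI : J :&: (I :\: J) = set0.
  by apply/setP=> z; rewrite !inE; case: (z \in J); rewrite ?andbF.
rewrite eU eI rho0 HI in h.
have c := cardsID J I; rewrite (setIidPr sJI) in c.
have h1 := R1 J; have h2 := R1 (I :\: J).
move: h c h1 h2; move: (rho J) (rho (I :\: J)) #|J| #|I :\: J| #|I|; clear; lia.
Qed.

Lemma rho_add1 X x : rho (x |: X) <= (rho X).+1.
Proof.
have h := R3 [set x] X; have h1 := R1 [set x]; rewrite cards1 in h1.
move: h h1; move: (rho (x |: X)) (rho ([set x] :&: X)) (rho [set x]) (rho X); clear; lia.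
Qed.

Lemma rho_U I A : (forall x, x \in A -> rho (x |: I) = rho I) -> rho (I :|: A) = rho I.
Proof.
move Hn: #|A| => n; elim: n A Hn => [|n IH] A Hn HA.
  by move/eqP: Hn; rewrite cards_eq0 => /eqP->; rewrite setU0.
have : A != set0 by rewrite -card_gt0 Hn.
case/set0Pn=> x xA.
have IH' : rho (I :|: (A :\ x)) = rho I.
  apply: IH; first by move: (cardsD1 x A); rewrite xA Hn add1n; case.
  by move=> y; rewrite inE => /andP[_ /HA].
have h := R3 (I :|: (A :\ x)) (x |: I).
have eU : (I :|: (A :\ x)) :|: (x |: I) = I :|: A.
  apply/setP=> z; rewrite !inE; case: (z =P x) => [->|_]; first by rewrite xA !orbT.
  by case: (z \in I); case: (z \in A).
have sI : I \subset (I :|: (A :\ x)) :&: (x |: I).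
  by rewrite subsetI subsetUl subsetUr.
have h2 := R2 sI.
have h3 := R2 (subsetUl I A).
rewrite eU IH' (HA x xA) in h.
move: h h2 h3; move: (rho (I :|: A)) (rho ((I :|: (A :\ x)) :&: (x |: I))) (rho I); clear; lia.
Qed.

Lemma rextend I X : rindep I -> I \subset X ->
  exists J, [/\ I \subset J, J \subset X, rindep J & rho J = rho X].
Proof.
move Hk: (#|X| - #|I|) => k; elim: k I Hk => [|k IH] I Hk iI sIX.
  exists I; split=> //; congr rho; apply/eqP; rewrite eqEcard sIX; lia.
case: (boolP [exists x in X :\: I, rindep (x |: I)]).
  case/existsP=> x /andP[]; rewrite inE => /andP[xI xX] ixI.
  have Hk' : #|X| - #|x |: I| = k by rewrite cardsU1 xI; lia.
  have sxX : x |: I \subset X by rewrite subUset sub1set xX sIX.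
  have [J [sJ1 sJ2 iJ cJ]] := IH _ Hk' ixI sxX.
  by exists J; split=> //; apply: subset_trans sJ1; apply: subsetUr.
move=> Hno; exists I; split=> //.
have HA : forall x, x \in X -> rho (x |: I) = rho I.
  move=> x xX; case xI: (x \in I); first by rewrite (setU1_same xI).
  have h1 := rho_add1 I x; have h2 := R2 (subsetUr [set x] I).
  have : rho (x |: I) != (rho I).+1.
    apply/negP=> /eqP E1; move/negP: Hno; apply; apply/existsP; exists x.
    rewrite !inE xI xX /= /rindep cardsU1 xI E1 /=.
    by move/eqP: iI => ->.
  move: h1 h2; move: (rho (x |: I)) (rho I); clear; move=> a b; lia.
by have := rho_U HA; rewrite (setUidPr sIX).
Qed.

Definition rbases := [set B : {set T} | [&& B \subset E, rho B == #|B| & rho B == rho E]].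

Lemma rbases_matroid (M : setsys T) : ground M = E -> bases M = rbases -> is_matroid M.
Proof.
move=> HE HB; split.
- have i0 : rindep set0 by rewrite /rindep rho0 cards0.
  have [J [_ sJ iJ cJ]] := rextend i0 (sub0set E).
  by apply/set0Pn; exists J; rewrite /rindep in iJ; rewrite HB inE sJ iJ cJ eqxx.
- by move=> B; rewrite HB HE inE => /andP[].
- move=> B1 B2; rewrite HB !inE => /and3P[s1 /eqP i1 /eqP e1] /and3P[s2 /eqP i2 /eqP e2] x.
  rewrite inE => /andP[xB2 xB1].
  set I := B1 :\ x.
  have iI : rindep I by apply: (@rindep_sub B1); [apply/eqP | apply: subD1set].
  have cI : #|B1| = #|I|.+1 by rewrite (cardsD1 x B1) xB1.
  have : ~ (forall y, y \in B2 -> rho (y |: I) = rho I).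
    move=> H; have := rho_U H; have h := R2 (subsetUr I B2).
    move/eqP: iI => h2; move=> h3.
    move: h h2 h3; rewrite e2 -e1 i1 cI; move: (rho (I :|: B2)) (rho I) #|I|; clear; lia.
  move=> Hn; have [y Hy0] := not_all_ex_not _ _ Hn; have [yB2 Hy] := imply_to_and _ _ Hy0.
  have yI : y \notin I by apply/negP=> yI; apply: Hy; rewrite (setU1_same yI).
  have h1 := rho_add1 I y; have h2 := R2 (subsetUr [set y] I).
  have Ey : rho (y |: I) = (rho I).+1.
    move: h1 h2 Hy; move: (rho (y |: I)) (rho I); clear; move=> a b; lia.
  have yB1 : y \notin B1.
    apply/negP=> yB1; move: yI; rewrite /I !inE yB1 andbT negbK => /eqP yx.
    by move: xB2; rewrite -yx yB2.
  exists y; first by rewrite inE yB1 yB2.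
  rewrite !inE; apply/and3P; split.
  + rewrite subUset sub1set (subsetP s2 y yB2) /=.
    by apply: subset_trans s1; apply: subD1set.
  + by rewrite Ey cardsU1 yI; move/eqP: iI => ->.
  + by rewrite Ey -e1 i1 cI; move/eqP: iI => ->.
Qed.

Lemma rbases_rank (M : setsys T) : ground M = E -> bases M = rbases ->
  forall X, X \subset E -> rank M X = rho X.
Proof.
move=> HE HB X sXE; apply/eqP; rewrite eqn_leq; apply/andP; split.
  apply/bigmax_leqP => B; rewrite HB inE => /and3P[_ iB _].
  have iBX : rindep (B :&: X) by apply: (rindep_sub iB); apply: subsetIl.
  by move/eqP: iBX => <-; apply: R2; apply: subsetIr.
have i0 : rindep set0 by rewrite /rindep rho0 cards0.
have [J [_ sJ iJ cJ]] := rextend i0 (sub0set X).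
have [B [sJB sBE iB cB]] := rextend iJ (subset_trans sJ sXE).
have HBb : B \in bases M by rewrite /rindep in iB; rewrite HB inE sBE iB /= cB.
apply: leq_trans (rank_ge X HBb).
rewrite -cJ; move/eqP: iJ => ->; apply: subset_leq_card.
by rewrite subsetI sJB sJ.
Qed.
End RankFn.


Section Minors.
Variable T : finType.
Implicit Types (M : setsys T) (S X Y C D B : {set T}).

Definition rhoC M C X := rank M (X :|: C) - rank M C.

Lemma rhoC_R1 M C : is_matroid M -> forall X, rhoC M C X <= #|X|.
Proof.
move=> HM X; rewrite /rhoC.
have h := rank_submod X C HM; have h1 := rank_le_card M X.
move: h h1; rewrite setUC; move: (rank M (C :|: X)) (rank M (X :&: C)) (rank M X) (rank M C) #|X|.
clear; lia.
Qed.

Lemma rhoC_R2 M C X Y : X \subset Y -> rhoC M C X <= rhoC M C Y.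
Proof.
move=> sXY; rewrite /rhoC; have := rank_mono M (setSU C sXY).
move: (rank M (X :|: C)) (rank M (Y :|: C)) (rank M C); clear; lia.
Qed.

Lemma rhoC_R3 M C : is_matroid M -> forall X Y,
  rhoC M C (X :|: Y) + rhoC M C (X :&: Y) <= rhoC M C X + rhoC M C Y.
Proof.
move=> HM X Y; rewrite /rhoC.
have h := rank_submod (X :|: C) (Y :|: C) HM.
have e1 : (X :|: C) :|: (Y :|: C) = (X :|: Y) :|: C.
  by apply/setP=> z; rewrite !inE; case: (z \in X); case: (z \in Y); case: (z \in C).
have e2 : (X :|: C) :&: (Y :|: C) = (X :&: Y) :|: C.
  by apply/setP=> z; rewrite !inE; case: (z \in X); case: (z \in Y); case: (z \in C).
rewrite e1 e2 in h.
have m1 := rank_mono M (subsetUr (X :&: Y) C).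
have m2 := rank_mono M (subsetUr X C).
have m3 := rank_mono M (subsetUr Y C).
have m4 := rank_mono M (subsetUr (X :|: Y) C).
move: h m1 m2 m3 m4.
move: (rank M (X :|: Y :|: C)) (rank M (X :&: Y :|: C)) (rank M (X :|: C)) (rank M (Y :|: C)) (rank M C).
clear; lia.
Qed.

Lemma minor_ground M C D : ground (minor M C D) = ground M :\: (C :|: D).
Proof. by []. Qed.

Lemma minor_bases_eq M C D : is_matroid M -> minor_data M C D ->
  bases (minor M C D) = rbases (rhoC M C) (ground M :\: (C :|: D)).
Proof.
move=> HM [sC sD dCD].
have eE : (ground M :\: (C :|: D)) :|: C = ground M :\: D.
  apply/setP=> z; rewrite !inE; case zC: (z \in C) => /=.
    by rewrite (disjointFr dCD zC) (subsetP sC z zC).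
  by rewrite orbF.
apply/setP=> B; rewrite /minor /rbases !inE /rhoC eE.
case: (B \subset _) => //=.
have m1 := rank_mono M (subsetUr B C).
have m2 : rank M C <= rank M (ground M :\: D).
  apply: rank_mono; apply/subsetP=> z zC; rewrite inE (subsetP sC z zC) andbT.
  by rewrite (disjointFr dCD zC).
move: m1 m2; move: (rank M (B :|: C)) (rank M C) (rank M (ground M :\: D)) #|B|.
clear=> a c e b h1 h2.
by congr andb; apply/eqP/eqP; lia.
Qed.

Lemma minor_matroid M C D : is_matroid M -> minor_data M C D -> is_matroid (minor M C D).
Proof.
move=> HM HD; apply: (rbases_matroid (rhoC_R1 C HM) (@rhoC_R2 M C) (rhoC_R3 C HM)).
  by [].
exact: minor_bases_eq.
Qed.

Lemma minor_rank M C D : is_matroid M -> minor_data M C D ->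
  forall X, X \subset ground M :\: (C :|: D) -> rank (minor M C D) X = rhoC M C X.
Proof.
move=> HM HD; apply: (rbases_rank (rhoC_R1 C HM) (@rhoC_R2 M C) (rhoC_R3 C HM)) => //.
exact: minor_bases_eq.
Qed.

Lemma minor_data_comp M C D C' D' : minor_data M C D -> minor_data (minor M C D) C' D' ->
  minor_data M (C :|: C') (D :|: D').
Proof.
move=> [sC sD dCD] [sC' sD' dCD'].
have sN : ground (minor M C D) \subset ground M by apply: subsetDl.
split.
- by rewrite subUset sC (subset_trans sC' sN).
- by rewrite subUset sD (subset_trans sD' sN).
- rewrite -setI_eq0; apply/eqP/setP=> z; rewrite !inE.
  case zC: (z \in C) => /=.
    rewrite (disjointFr dCD zC) /=.
    case zD': (z \in D') => //.
    by move: (subsetP sD' z zD'); rewrite !inE zC.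
  case zC': (z \in C') => //=.
  rewrite (disjointFr dCD' zC') orbF.
  by move: (subsetP sC' z zC'); rewrite !inE; case: (z \in D); rewrite ?orbT.
Qed.

Lemma minor_minor M C D C' D' : is_matroid M -> minor_data M C D ->
  minor_data (minor M C D) C' D' ->
  minor (minor M C D) C' D' = minor M (C :|: C') (D :|: D').
Proof.
move=> HM HD HD'.
have [sC sD dCD] := HD.
have [sC' sD' dCD'] := HD'.
rewrite minor_ground in sC' sD'.
have eG : (ground M :\: (C :|: D)) :\: (C' :|: D') = ground M :\: ((C :|: C') :|: (D :|: D')).
  apply/setP=> z; rewrite !inE.
  by case: (z \in C); case: (z \in C'); case: (z \in D); case: (z \in D').
have eE : ((ground M :\: (C :|: D)) :\: D') :|: C = ground M :\: (D :|: D').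
  apply/setP=> z; rewrite !inE; case zC: (z \in C) => /=; last by rewrite orbF; case: (z \in D); case: (z \in D').
  rewrite orbT (disjointFr dCD zC) (subsetP sC z zC) /=.
  case zD': (z \in D') => //.
  by move: (subsetP sD' z zD'); rewrite !inE zC.
rewrite {1}/minor minor_ground eG /minor.
congr SetSys.
apply/setP=> B; rewrite !inE.
case sB: (B \subset _) => //=.
have sB' : B \subset ground M :\: (C :|: D).
  by apply: subset_trans sB _; rewrite -eG; apply: subsetDl.
rewrite -!/(minor M C D).
rewrite !(minor_rank HM HD); last first.
- by rewrite subUset sB' sC'.
- by [].
- by apply: subsetDl.
rewrite /rhoC eE.
have e1 : B :|: C' :|: C = B :|: (C :|: C').
  by apply/setP=> z; rewrite !inE; case: (z \in B); case: (z \in C); case: (z \in C').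
rewrite e1 (setUC C' C).
have m1 := rank_mono M (subsetUl C C').
have m2 := rank_mono M (subsetUr B (C :|: C')).
have m3 : rank M C <= rank M (ground M :\: (D :|: D')).
  by apply: rank_mono; rewrite -eE; apply: subsetUr.
move: m1 m2 m3.
move: (rank M (B :|: (C :|: C'))) (rank M (C :|: C')) (rank M C) (rank M (ground M :\: (D :|: D'))) #|B|.
clear=> a d c e b h1 h2 h3.
by congr andb; apply/eqP/eqP; lia.
Qed.
End Minors.

Import GRing.Theory Num.Theory.
Local Open Scope ring_scope.


Section PHom.
Variables (N : comNzRingType) (S F : fieldType).
Variables (iota : {rmorphism N -> S}) (ev : {rmorphism N -> F}).
Hypothesis ker : forall p, iota p = 0 -> ev p = 0.

Definition inD (x : S) := exists p q, ev q != 0 /\ x = iota p / iota q.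

Definition inhNN : inhabited (N * N) := inhabits (0, 1).

Definition phi (x : S) : F :=
  let pq := epsilon inhNN (fun pq => ev pq.2 != 0 /\ x = iota pq.1 / iota pq.2) in
  ev pq.1 / ev pq.2.

Lemma iota_neq0 q : ev q != 0 -> iota q != 0.
Proof. by apply: contraNneq => /ker ->. Qed.

Lemma phiE p q : ev q != 0 -> phi (iota p / iota q) = ev p / ev q.
Proof.
move=> hq; rewrite /phi.
have := epsilon_spec inhNN (fun pq => ev pq.2 != 0 /\ iota p / iota q = iota pq.1 / iota pq.2)
  (ex_intro _ (p, q) (conj hq erefl)).
case: (epsilon _ _) => p' q' /= [hq' E].
have iq := iota_neq0 hq; have iq' := iota_neq0 hq'.
move/eqP: E; rewrite eqr_div // => /eqP E.
have E2 : iota (p * q' - p' * q) = 0 by rewrite rmorphB !rmorphM E subrr.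
have := ker E2; rewrite rmorphB !rmorphM => /eqP; rewrite subr_eq0 => E3.
by apply/eqP; rewrite eqr_div // eq_sym.
Qed.

Definition Rel x y := inD x /\ phi x = y.

Lemma Rel_iota p : Rel (iota p) (ev p).
Proof.
have h1 : ev 1 != 0 by rewrite rmorph1 oner_neq0.
split; first by exists p, 1; split=> //; rewrite rmorph1 divr1.
by rewrite -[iota p]divr1 -(rmorph1 iota) phiE // rmorph1 divr1.
Qed.

Lemma Rel0 : Rel 0 0.
Proof. by have := Rel_iota 0; rewrite !rmorph0. Qed.

Lemma Rel1 : Rel 1 1.
Proof. by have := Rel_iota 1; rewrite !rmorph1. Qed.

Lemma Rel_fun x y1 y2 : Rel x y1 -> Rel x y2 -> y1 = y2.
Proof. by move=> [_ <-] [_ <-]. Qed.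

Lemma RelE x y : Rel x y -> exists p q, [/\ ev q != 0, x = iota p / iota q & y = ev p / ev q].
Proof. by move=> [[p [q [hq ->]]] <-]; exists p, q; split=> //; rewrite phiE. Qed.

Lemma Rel_pq p q : ev q != 0 -> Rel (iota p / iota q) (ev p / ev q).
Proof. by move=> hq; split; [exists p, q | rewrite phiE]. Qed.

Lemma RelD x1 y1 x2 y2 : Rel x1 y1 -> Rel x2 y2 -> Rel (x1 + x2) (y1 + y2).
Proof.
move=> /RelE [p1 [q1 [h1 -> ->]]] /RelE [p2 [q2 [h2 -> ->]]].
have h : ev (q1 * q2) != 0 by rewrite rmorphM mulf_neq0.
have := Rel_pq (p1 * q2 + p2 * q1) h.
have i1 := iota_neq0 h1; have i2 := iota_neq0 h2.
rewrite !rmorphD !rmorphM.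
have -> : iota p1 * iota q2 + iota p2 * iota q1 = (iota p1 / iota q1 + iota p2 / iota q2) * (iota q1 * iota q2).
  by field; rewrite ?i1 ?i2.
have -> : ev p1 * ev q2 + ev p2 * ev q1 = (ev p1 / ev q1 + ev p2 / ev q2) * (ev q1 * ev q2).
  by field; rewrite ?h1 ?h2.
by rewrite !mulfK // mulf_neq0.
Qed.

Lemma RelM x1 y1 x2 y2 : Rel x1 y1 -> Rel x2 y2 -> Rel (x1 * x2) (y1 * y2).
Proof.
move=> /RelE [p1 [q1 [h1 -> ->]]] /RelE [p2 [q2 [h2 -> ->]]].
have h : ev (q1 * q2) != 0 by rewrite rmorphM mulf_neq0.
have := Rel_pq (p1 * p2) h.
by rewrite !rmorphM !mulf_div.
Qed.

Lemma RelN x y : Rel x y -> Rel (- x) (- y).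
Proof.
move=> /RelE [p [q [h -> ->]]].
by have := Rel_pq (- p) h; rewrite !rmorphN !mulNr.
Qed.

Lemma RelB x1 y1 x2 y2 : Rel x1 y1 -> Rel x2 y2 -> Rel (x1 - x2) (y1 - y2).
Proof. by move=> h1 h2; apply: RelD h1 (RelN h2). Qed.

Lemma RelV x y : Rel x y -> y != 0 -> Rel x^-1 y^-1.
Proof.
move=> /RelE [p [q [h -> ->]]] hy.
have hp : ev p != 0 by move: hy; apply: contraNneq => ->; rewrite mul0r.
by have := Rel_pq q hp; rewrite !invf_div.
Qed.

Lemma RelX x y n : Rel x y -> Rel (x ^+ n) (y ^+ n).
Proof. by move=> h; elim: n => [|n IH]; [rewrite !expr0; apply: Rel1 | rewrite !exprS; apply: RelM]. Qed.

Lemma Rel_det n (A1 : 'M[S]_n) (A2 : 'M[F]_n) :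
  (forall i j, Rel (A1 i j) (A2 i j)) -> Rel (\det A1) (\det A2).
Proof.
move=> H; rewrite /determinant.
apply: (big_ind2 Rel Rel0 (@RelD)) => s _.
apply: RelM; first by apply: RelX; apply: RelN; apply: Rel1.
by apply: (big_ind2 Rel Rel1 (@RelM)) => i _.
Qed.

Variables (GS : S -> Prop) (GF : F -> Prop).
Hypothesis GF1 : GF 1.
Hypothesis GFM : forall a b, GF a -> GF b -> GF (a * b).
Hypothesis GFV : forall a, GF a -> GF a^-1.
Hypothesis GF0 : forall a, GF a -> a != 0.

Definition Good x := inD x /\ GF (phi x).

Lemma GoodRel x : Good x -> Rel x (phi x).
Proof. by case. Qed.

Lemma Good_mul x y : Good x -> Good y -> Good (x * y).
Proof.
move=> [hx gx] [hy gy].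
have [h1 h2] := RelM (conj hx erefl) (conj hy erefl).
by split=> //; rewrite h2; apply: GFM.
Qed.

Lemma Good_inv x : Good x -> Good x^-1.
Proof.
move=> [hx gx].
have [h1 h2] := RelV (conj hx erefl) (GF0 gx).
by split=> //; rewrite h2; apply: GFV.
Qed.

Lemma Good1 : Good 1.
Proof. by have [h1 h2] := Rel1; split=> //; rewrite h2. Qed.

Lemma Good_expn x n : Good x -> Good (x ^+ n).
Proof. by move=> h; elim: n => [|n IH]; [rewrite expr0; apply: Good1 | rewrite exprS; apply: Good_mul]. Qed.

Lemma Good_expz x (z : int) : Good x -> Good (x ^ z).
Proof.
move=> h; case: z => n; first by apply: Good_expn.
by apply: Good_inv; apply: Good_expn.
Qed.

Fixpoint allgood (s : seq S) : Prop :=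
  match s with [::] => True | x :: s' => Good x /\ allgood s' end.

Lemma allgood_nth s j : allgood s -> (j < size s)%N -> Good s`_j.
Proof.
elim: s j => [|x s IH] [|j] //= [h1 h2]; first by move=> _; exact: h1.
by move=> hj; apply: IH.
Qed.

Lemma gen_good gs x : allgood gs -> gen_group gs x -> Good x.
Proof.
move=> hg [es [hs ->]].
apply: (big_ind Good Good1 Good_mul) => j _.
by apply: Good_expz; apply: allgood_nth.
Qed.

Lemma phi0 : phi 0 = 0.
Proof. by case: Rel0. Qed.

Lemma transfer (T : finType) (M : setsys T) :
  (forall x, GS x -> Good x) ->
  representable (@PartialField S GS) M -> representable (@PartialField F GF) M.
Proof.
move=> HG [X [Y [A [[HA1 HA2] Hiso]]]].
have HD : forall x y, Rel (A x y) (phi (A x y)).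
  move=> x y; case: (HA1 x y) => [->|hg]; first by rewrite phi0; apply: Rel0.
  by apply: GoodRel; apply: HG.
pose A' := fun x y => phi (A x y).
have Hsub : forall r c, Rel (subdet A r c) (subdet A' r c).
  move=> r c; rewrite /subdet; apply: Rel_det => i j; rewrite !mxE.
  case: (nth None [seq Some x | x <- enum r] i) => [x|]; case: (nth None [seq Some y | y <- enum c] j) => [y|] //; try apply: Rel0.
have Hkey : forall (r : {set X}) (c : {set Y}), #|r| = #|c| -> (subdet A' r c != 0) = (subdet A r c != 0).
  move=> r c hrc; case: (subdet A r c =P 0) => [h0|hn].
    by have := Hsub r c; rewrite h0 => /(Rel_fun Rel0) <-; rewrite eqxx.
  have := HA2 r c hrc (introN eqP hn) => /HG [hD hF].
  by rewrite -(Rel_fun (conj hD erefl) (Hsub r c)); apply: GF0.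
exists X, Y, A'; split; first split.
- move=> x y; rewrite /A'; case: (HA1 x y) => [->|hg]; first by left; rewrite phi0.
  by right; have [] := HG _ hg.
- move=> r c hrc hn; have hn' : subdet A r c != 0 by rewrite -Hkey.
  have [hD hF] := HG _ (HA2 r c hrc hn').
  by rewrite -(Rel_fun (conj hD erefl) (Hsub r c)).
- suff -> : matroid_of_matrix A' = matroid_of_matrix A by [].
  rewrite /matroid_of_matrix; congr SetSys; apply/setP=> B; rewrite !inE.
  apply: eq_existsb => Z; congr andb.
  by case: eqP => //= h; rewrite Hkey.
Qed.
End PHom.


Section GenGroup.
Variable F : fieldType.
Variable gs : seq F.
Hypothesis gs_nz : forall j, (j < size gs)%N -> gs`_j != 0.

Lemma gen1 : gen_group gs 1.
Proof.
exists (nseq (size gs) 0); split; first by rewrite size_nseq.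
by rewrite big1 // => j _; rewrite nth_nseq ltn_ord expr0z.
Qed.

Lemma genM x y : gen_group gs x -> gen_group gs y -> gen_group gs (x * y).
Proof.
move=> [e1 [s1 ->]] [e2 [s2 ->]].
exists (mkseq (fun j => e1`_j + e2`_j) (size gs)); split; first by rewrite size_mkseq.
rewrite -big_split /=; apply: eq_bigr => j _.
by rewrite nth_mkseq // expfzDr // gs_nz.
Qed.

Lemma genV x : gen_group gs x -> gen_group gs x^-1.
Proof.
move=> [e [s ->]].
exists (mkseq (fun j => - e`_j) (size gs)); split; first by rewrite size_mkseq.
rewrite -prodfV; apply: eq_bigr => j _.
by rewrite nth_mkseq // invr_expz.
Qed.

Lemma gen0 x : gen_group gs x -> x != 0.
Proof.
move=> [e [s ->]].
apply: (big_ind (fun x => x != 0)) => //; first by apply: oner_neq0.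
  by move=> a b; apply: mulf_neq0.
by move=> j _; apply: expfz_neq0; apply: gs_nz.
Qed.

Lemma gen_gen k : (k < size gs)%N -> gen_group gs gs`_k.
Proof.
move=> hk.
exists (mkseq (fun j => ((j == k) : nat)%:Z) (size gs)); split; first by rewrite size_mkseq.
rewrite (bigD1 (Ordinal hk)) //= big1 => [|j hj].
  by rewrite nth_mkseq // eqxx expr1z mulr1.
rewrite nth_mkseq //.
have -> : (j == k :> nat) = false by apply/negP=> /eqP h; move: hj; rewrite -val_eqE /= h eqxx.
by rewrite expr0z.
Qed.
End GenGroup.

Lemma size_map_le (R1 R2 : nzSemiRingType) (f : R1 -> R2) (p : {poly R1}) :
  (size (map_poly f p) <= size p)%N.
Proof. by rewrite /map_poly size_poly. Qed.

Lemma tofrac_neq0_ev (R : idomainType) (K : nzRingType) (E : {rmorphism R -> K}) (p : R) :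
  E p != 0 -> tofrac p != 0.
Proof. by move=> h; rewrite tofrac_eq0; apply: contraNneq h => ->; rewrite rmorph0. Qed.

Lemma transfer_gen (N : comNzRingType) (S F : fieldType) (iota : {rmorphism N -> S})
  (ev : {rmorphism N -> F}) (ker : forall p, iota p = 0 -> ev p = 0)
  (gsS : seq S) (gsF : seq F) (nzF : forall j, (j < size gsF)%N -> gsF`_j != 0) :
  allgood iota ev (gen_group gsF) gsS ->
  forall (T : finType) (M : setsys T),
  representable (@PartialField S (gen_group gsS)) M ->
  representable (@PartialField F (gen_group gsF)) M.
Proof.
move=> hall T M; apply: (transfer ker (gen0 nzF)).
move=> x; apply: gen_good => //.
- exact: gen1.
- exact: genM.
- exact: genV.
- exact: gen0.
Qed.

Lemma GoodI (N : comNzRingType) (S F : fieldType) (iota : {rmorphism N -> S})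
  (ev : {rmorphism N -> F}) (GF : F -> Prop) x y :
  Rel iota ev x y -> GF y -> Good iota ev GF x.
Proof. by case=> h1 h2 g; split=> //; rewrite h2. Qed.


Definition io21 : {rmorphism {poly int} -> algC} := horner_eval ('i : algC) \o map_poly intr.
Definition ev21 : {rmorphism {poly int} -> 'F_5} := horner_eval (2 : 'F_5) \o map_poly intr.

Definition d21 : {poly int} := 'X^2 + 1%:P.

Lemma mod21 (K : comNzRingType) (f : {rmorphism {poly int} -> K}) p :
  f d21 = 0 -> f p = f (p %% d21).
Proof.
have md : d21 \is monic by apply: monicXnaddC.
by move=> h; rewrite {1}(Pdiv.IdomainMonic.divp_eq md p) rmorphD rmorphM h mulr0 add0r.
Qed.

Lemma ker21 p : io21 p = 0 -> ev21 p = 0.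
Proof.
have e1 : io21 d21 = 0.
  by rewrite /= horner_evalE rmorphD /= map_polyXn map_polyC hornerD hornerXn hornerC /= sqrCi addNr.
have e2 : ev21 d21 = 0.
  by rewrite /= horner_evalE rmorphD /= map_polyXn map_polyC hornerD hornerXn hornerC /=; apply/eqP; vm_compute.
rewrite (mod21 _ e1) (mod21 _ e2).
have md : d21 \is monic by apply: monicXnaddC.
set r := _ %% _.
have sr : (size r <= 2)%N.
  by have := ltn_modp p d21; rewrite monic_neq0 // size_addl ?size_polyXn ?size_polyC.
have hI : io21 r = (r`_0)%:~R + (r`_1)%:~R * 'i.
  rewrite /= horner_evalE (horner_coef_wide _ (leq_trans (size_map_le _ _) sr)).
  by rewrite !big_ord_recl big_ord0 /= !coef_map /= expr0 mulr1 expr1 addr0.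
have hE : ev21 r = (r`_0)%:~R + (r`_1)%:~R * 2.
  rewrite /= horner_evalE (horner_coef_wide _ (leq_trans (size_map_le _ _) sr)).
  by rewrite !big_ord_recl big_ord0 /= !coef_map /= expr0 mulr1 expr1 addr0.
rewrite hI hE => h.
have E : forall x y : algC, (x + y * 'i) * (x - y * 'i) = x * x + y * y.
  move=> x y; have -> : (x + y * 'i) * (x - y * 'i) = x * x + y * y - y * y * ('i ^+ 2 + 1) by ring.
  by rewrite sqrCi addNr mulr0 subr0.
have h2 : ((r`_0) * (r`_0) + (r`_1) * (r`_1))%:~R = 0 :> algC.
  by rewrite rmorphD !rmorphM /= -E h mul0r.
move/eqP: h2; rewrite intr_eq0 => /eqP h3.
have [-> ->] : r`_0 = 0 /\ r`_1 = 0 by nia.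
by rewrite !mul0r addr0.
Qed.

Lemma transfer21 (T : finType) (M : setsys T) : representable H2 M -> representable H1 M.
Proof.
have Ri : Rel io21 ev21 'i 2.
  have := Rel_iota ker21 'X.
  by rewrite /= !horner_evalE !map_polyX !hornerX.
have GF0 : forall a : 'F_5, a != 0 -> a != 0 by [].
apply: (transfer ker21 (GS := gen_group [:: 'i; 1 - 'i]) GF0).
move=> x; apply: gen_good.
- exact: ker21.
- by apply: oner_neq0.
- by move=> a b; apply: mulf_neq0.
- by move=> a; rewrite invr_eq0.
- by [].
split.
  by case: Ri => h1 h2; split => //; rewrite h2; apply/eqP; vm_compute.
split=> //.
by have := RelB ker21 (Rel1 ker21) Ri; case=> h1 h2; split=> //; rewrite h2; apply/eqP; vm_compute.
Qed.


Definition io32 : {rmorphism {poly rat} -> Q1} := @tofrac {poly rat}.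
Definition ev32 : {rmorphism {poly rat} -> algC} := horner_eval ('i : algC) \o map_poly ratr.

Lemma ker32 p : io32 p = 0 -> ev32 p = 0.
Proof. by move/eqP; rewrite tofrac_eq0 => /eqP ->; rewrite rmorph0. Qed.

Lemma i_neq1 : ('i : algC) != 1.
Proof.
apply/negP=> /eqP h; have := sqrCi algC; rewrite h expr1n => /eqP.
by rewrite -addr_eq0 (_ : (1 + 1 : algC) = 2%:R) // pnatr_eq0.
Qed.

Definition gs2 : seq algC := [:: 'i; 1 - 'i].

Lemma nz2 : forall j, (j < size gs2)%N -> gs2`_j != 0.
Proof.
case=> [|[|j]] //= _; first exact: neq0Ci.
by rewrite subr_eq0 eq_sym i_neq1.
Qed.

Lemma transfer32 (T : finType) (M : setsys T) : representable H3 M -> representable H2 M.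
Proof.
have Ra : Rel io32 ev32 a1 'i.
  have := Rel_iota ker32 'X.
  by rewrite /= !horner_evalE !map_polyX !hornerX.
apply: (transfer_gen ker32 nz2).
have g0 : gen_group gs2 'i by apply: (gen_gen (k := 0)).
have g1 : gen_group gs2 (1 - 'i) by apply: (gen_gen (k := 1)).
split.
  apply: (GoodI (RelN ker32 (Rel1 ker32))).
  by rewrite -(sqrCi algC) expr2; apply: (genM nz2).
split; first by apply: (GoodI Ra).
split; first by apply: (GoodI (RelB ker32 (Rel1 ker32) Ra)).
split=> //.
apply: (GoodI (RelD ker32 (RelB ker32 (RelX ker32 2 Ra) Ra) (Rel1 ker32))).
rewrite sqrCi (_ : -1 - 'i + 1 = 'i^-1); first by apply: genV.
by rewrite invCi; ring.
Qed.


Lemma tofrac1_neq0 (p : {poly rat}) (c : rat) : p.[c] != 0 -> tofrac p != 0.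
Proof.
move=> h; apply: (tofrac_neq0_ev (E := horner_eval c)).
by [].
Qed.

Lemma a1_neq0 : a1 != 0.
Proof. by rewrite /a1 tofrac_eq0 polyX_eq0. Qed.

Lemma a1m1_neq0 : a1 - 1 != 0.
Proof.
have := @tofrac1_neq0 ('X - 1) 0; rewrite rmorphB rmorph1; apply.
by rewrite !hornerE oppr_eq0 oner_eq0.
Qed.

Lemma oma1_neq0 : 1 - a1 != 0.
Proof. by rewrite -opprB oppr_eq0 a1m1_neq0. Qed.

Lemma q1_neq0 : a1 ^+ 2 - a1 + 1 != 0.
Proof.
have := @tofrac1_neq0 ('X ^+ 2 - 'X + 1) 0; rewrite rmorphD rmorphB rmorphXn rmorph1; apply.
by rewrite !hornerE; apply/negP; vm_compute.
Qed.

Definition gs3 : seq Q1 := [:: -1; a1; 1 - a1; a1 ^+ 2 - a1 + 1].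

Lemma nz3 : forall j, (j < size gs3)%N -> gs3`_j != 0.
Proof.
case=> [|[|[|[|j]]]] //= _.
- by rewrite oppr_eq0 oner_eq0.
- exact: a1_neq0.
- exact: oma1_neq0.
- exact: q1_neq0.
Qed.


Section Ids43.
Variable K : fieldType.
Variable a : K.
Hypothesis h2 : a - 1 != 0.
Hypothesis h3 : 1 - a != 0.
Lemma I1 : a / (a - 1) = -1 * a * (1 - a)^-1.
Proof. by field; rewrite ?h2 ?h3. Qed.
Lemma I2 : a - 1 = -1 * (1 - a).
Proof. by ring. Qed.
Lemma I3 : a / (a - 1) - 1 = -1 * (1 - a)^-1.
Proof. by field; rewrite ?h2 ?h3. Qed.
Lemma I4 : a * (a / (a - 1)) - 1 = -1 * (a ^+ 2 - a + 1) * (1 - a)^-1.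
Proof. by field; rewrite ?h2 ?h3. Qed.
Lemma I5 : a + a / (a - 1) - 2 * a * (a / (a - 1)) = a * a * (1 - a)^-1.
Proof. by field; rewrite ?h2 ?h3. Qed.
End Ids43.

Definition bb : Q1 := a1 / (a1 - 1).
Definition io43 : {rmorphism {poly {poly rat}} -> Q2} := @tofrac {poly {poly rat}}.
Definition ev43 : {rmorphism {poly {poly rat}} -> Q1} := horner_eval bb \o map_poly (@tofrac {poly rat}).

Lemma ker43 p : io43 p = 0 -> ev43 p = 0.
Proof. by move/eqP; rewrite tofrac_eq0 => /eqP ->; rewrite rmorph0. Qed.

Lemma transfer43 (T : finType) (M : setsys T) : representable H4 M -> representable H3 M.
Proof.
have Ra : Rel io43 ev43 a2 a1.
  have := Rel_iota ker43 'X%:P.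
  by rewrite /= !horner_evalE map_polyC hornerC.
have Rb : Rel io43 ev43 b2 bb.
  have := Rel_iota ker43 'X.
  by rewrite /= !horner_evalE map_polyX hornerX.
have R1 := Rel1 ker43.
have R2 : Rel io43 ev43 2 2 by have := Rel_iota ker43 2; rewrite !rmorph_nat.
apply: (transfer_gen ker43 nz3).
have g0 : gen_group gs3 (-1) by apply: (gen_gen (k := 0)).
have ga : gen_group gs3 a1 by apply: (gen_gen (k := 1)).
have g1a : gen_group gs3 (1 - a1) by apply: (gen_gen (k := 2)).
have gq : gen_group gs3 (a1 ^+ 2 - a1 + 1) by apply: (gen_gen (k := 3)).
have gM := genM nz3; have gV := @genV _ gs3.
have h1 := a1_neq0; have h2 := a1m1_neq0; have h3 := oma1_neq0.
split; first by apply: (GoodI (RelN ker43 R1)).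
split; first by apply: (GoodI Ra).
split.
  apply: (GoodI Rb); rewrite /bb (I1 h2 h3).
  by apply: (gM); [apply: (gM)|apply: (gV)].
split.
  apply: (GoodI (RelB ker43 Ra R1)); rewrite I2.
  by apply: (gM).
split.
  apply: (GoodI (RelB ker43 Rb R1)); rewrite /bb (I3 h2 h3).
  by apply: (gM); [|apply: (gV)].
split.
  apply: (GoodI (RelB ker43 (RelM ker43 Ra Rb) R1)).
  rewrite /bb (I4 h2 h3).
  by apply: (gM); [apply: (gM)|apply: (gV)].
split=> //.
apply: (GoodI (RelB ker43 (RelD ker43 Ra Rb) (RelM ker43 (RelM ker43 R2 Ra) Rb))).
rewrite /bb (I5 h2 h3).
by apply: (gM); [apply: (gM)|apply: (gV)].
Qed.


Definition E2 : {rmorphism {poly {poly rat}} -> rat} :=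
  horner_eval (3 : rat) \o map_poly (horner_eval (2 : rat)).

Lemma tofrac2_neq0 (p : {poly {poly rat}}) : E2 p != 0 -> tofrac p != 0.
Proof. by move=> h; apply: (tofrac_neq0_ev (E := E2)). Qed.

Ltac nzq p := have := @tofrac2_neq0 p;
  rewrite ?(rmorphB, rmorphD, rmorphM, rmorph1, rmorph_nat); apply;
  rewrite /= ?(rmorphB, rmorphD, rmorphM, rmorph1, rmorph_nat) /=;
  do 3!rewrite ?horner_evalE ?map_polyC ?map_polyX ?hornerE /=; try done.

Lemma a2_neq0 : a2 != 0.
Proof. rewrite /a2. nzq ('X%:P : {poly {poly rat}}). Qed.
Lemma b2_neq0 : b2 != 0.
Proof. rewrite /b2. nzq ('X : {poly {poly rat}}). Qed.
Lemma a2m1_neq0 : a2 - 1 != 0.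
Proof. rewrite /a2. nzq ('X%:P - 1 : {poly {poly rat}}). Qed.
Lemma b2m1_neq0 : b2 - 1 != 0.
Proof. rewrite /b2. nzq ('X - 1 : {poly {poly rat}}). Qed.
Lemma ab2m1_neq0 : a2 * b2 - 1 != 0.
Proof. rewrite /a2 /b2. nzq ('X%:P * 'X - 1 : {poly {poly rat}}). Qed.
Lemma q2_neq0 : a2 + b2 - 2 * a2 * b2 != 0.
Proof. rewrite /a2 /b2. nzq ('X%:P + 'X - 2 * 'X%:P * 'X : {poly {poly rat}}). Qed.

Definition gs4 : seq Q2 := [:: -1; a2; b2; a2 - 1; b2 - 1; a2 * b2 - 1; a2 + b2 - 2 * a2 * b2].

Lemma nz4 : forall j, (j < size gs4)%N -> gs4`_j != 0.
Proof.
case=> [|[|[|[|[|[|[|j]]]]]]] //= _.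
- by rewrite oppr_eq0 oner_eq0.
- exact: a2_neq0.
- exact: b2_neq0.
- exact: a2m1_neq0.
- exact: b2m1_neq0.
- exact: ab2m1_neq0.
- exact: q2_neq0.
Qed.

Section Ids54.
Variable K : fieldType.
Variables a b : K.
Hypothesis ha : a != 0.
Lemma J1 : a^-1 - 1 = -1 * (a - 1) * a^-1.
Proof. by field. Qed.
Lemma J2 : a^-1 - b = -1 * (a * b - 1) * a^-1.
Proof. by field. Qed.
Lemma J3 : b - a^-1 * b = b * (a - 1) * a^-1.
Proof. by field. Qed.
Lemma J4 : (1 - b) - (1 - a^-1) * b = (a + b - 2 * a * b) * a^-1.
Proof. by field. Qed.
End Ids54.

Definition h54a : {rmorphism rat -> Q2} := (@tofrac {poly {poly rat}}) \o polyC \o polyC.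
Definition h54b : {rmorphism {poly rat} -> Q2} := horner_eval (a2^-1) \o map_poly h54a.
Definition h54c : {rmorphism {poly {poly rat}} -> Q2} := horner_eval b2 \o map_poly h54b.
Definition ev54 : {rmorphism {poly {poly {poly rat}}} -> Q2} := horner_eval b2 \o map_poly h54c.
Definition io54 : {rmorphism {poly {poly {poly rat}}} -> Q3} := @tofrac {poly {poly {poly rat}}}.

Lemma ker54 p : io54 p = 0 -> ev54 p = 0.
Proof. by move/eqP; rewrite tofrac_eq0 => /eqP ->; rewrite rmorph0. Qed.

Lemma transfer54 (T : finType) (M : setsys T) : representable H5 M -> representable H4 M.
Proof.
have Ra : Rel io54 ev54 a3 (a2^-1).
  have := Rel_iota ker54 'X%:P%:P.
  rewrite /= !horner_evalE /= map_polyC hornerC /= !horner_evalE map_polyC hornerC /=.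
  by rewrite horner_evalE map_polyX hornerX.
have Rb : Rel io54 ev54 b3 b2.
  have := Rel_iota ker54 'X%:P.
  by rewrite /= !horner_evalE /= map_polyC hornerC /= !horner_evalE map_polyX hornerX.
have Rc : Rel io54 ev54 c3 b2.
  have := Rel_iota ker54 'X.
  by rewrite /= !horner_evalE /= map_polyX hornerX.
have R1 := Rel1 ker54.
apply: (transfer_gen ker54 nz4).
have g0 : gen_group gs4 (-1) by apply: (gen_gen (k := 0)).
have ga : gen_group gs4 a2 by apply: (gen_gen (k := 1)).
have gb : gen_group gs4 b2 by apply: (gen_gen (k := 2)).
have gam : gen_group gs4 (a2 - 1) by apply: (gen_gen (k := 3)).
have gbm : gen_group gs4 (b2 - 1) by apply: (gen_gen (k := 4)).
have gab : gen_group gs4 (a2 * b2 - 1) by apply: (gen_gen (k := 5)).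
have gq : gen_group gs4 (a2 + b2 - 2 * a2 * b2) by apply: (gen_gen (k := 6)).
have gM := genM nz4; have gV := @genV _ gs4.
have ha := a2_neq0.
split; first by apply: (GoodI (RelN ker54 R1)).
split; first by apply: (GoodI Ra); apply: (gV).
split; first by apply: (GoodI Rb).
split; first by apply: (GoodI Rc).
split.
  apply: (GoodI (RelB ker54 Ra R1)); rewrite (J1 ha).
  by apply: (gM); [apply: (gM)|apply: (gV)].
split; first by apply: (GoodI (RelB ker54 Rb R1)).
split; first by apply: (GoodI (RelB ker54 Rc R1)).
split.
  apply: (GoodI (RelB ker54 Ra Rc)); rewrite (J2 b2 ha).
  by apply: (gM); [apply: (gM)|apply: (gV)].
split.
  apply: (GoodI (RelB ker54 Rc (RelM ker54 Ra Rb))); rewrite (J3 b2 ha).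
  by apply: (gM); [apply: (gM)|apply: (gV)].
split=> //.
apply: (GoodI (RelB ker54 (RelB ker54 R1 Rc) (RelM ker54 (RelB ker54 R1 Ra) Rb))).
rewrite (J4 b2 ha).
by apply: (gM); [|apply: (gV)].
Qed.

Local Close Scope ring_scope.
Unset Implicit Arguments.


Lemma hom_step (i : nat) (T : finType) (M : setsys T) : (1 <= i <= 4)%N ->
  representable (Hydra i.+1) M -> representable (Hydra i) M.
Proof.
case: i => [|[|[|[|[|i]]]]] //= _.
- exact: transfer21.
- exact: transfer32.
- exact: transfer43.
- exact: transfer54.
Qed.

Lemma pick_bad (T : finType) (M : setsys T) (P : partial_field) :
  ~ (forall C D, minor_data M C D -> C :|: D != set0 -> representable P (minor M C D)) ->
  exists C D, [/\ minor_data M C D, C :|: D != set0 & ~ representable P (minor M C D)].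
Proof.
move=> Hex; apply: NNPP => H; apply: Hex => C D h1 h2; apply: NNPP => h3.
by apply: H; exists C, D.
Qed.

Theorem lemma5p1 (i : nat) (T : finType) (M : setsys T) :
  (1 <= i <= 4)%N ->
  excluded_minor (Hydra i) M ->
  (exists (T' : finType) (N : setsys T'), in_N i N /\ has_minor_iso M N)
  \/ excluded_minor (Hydra i.+1) M.
Proof.
move=> hi [HM Hnr Hmin].
have Hnr' : ~ representable (Hydra i.+1) M by move=> h; apply: Hnr; apply: hom_step.
case: (classic (forall C D, minor_data M C D -> C :|: D != set0 ->
   representable (Hydra i.+1) (minor M C D))) => [Hall|Hex].
  by right; split.
left.
have [C [D [HD Hne Hnrep]]] := @pick_bad _ _ _ Hex.
move Hn : #|ground M :\: (C :|: D)| => n.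
elim/ltn_ind: n C D Hn HD Hne Hnrep => n IH C D Hn HD Hne Hnrep.
case: (classic (forall C' D', minor_data (minor M C D) C' D' -> C' :|: D' != set0 ->
   representable (Hydra i.+1) (minor (minor M C D) C' D'))) => [HallN|HexN].
- exists T, (minor M C D); split.
  + split; first split.
    * exact: minor_matroid.
    * exact: Hnrep.
    * exact: HallN.
    * exact: Hmin.
  + exists C, D; split => //; exists id; split.
    * by move=> x y _ _ h.
    * by rewrite imset_id.
    * by move=> Z _; rewrite imset_id.
- have [C' [D' [HD' Hne' Hnrep']]] := @pick_bad _ _ _ HexN.
  have HD2 := minor_data_comp HD HD'.
  rewrite minor_minor // in Hnrep'.
  have [sC' sD' _] := HD'.
  rewrite minor_ground in sC' sD'.
  apply: (IH #|ground M :\: ((C :|: C') :|: (D :|: D'))|) _ (C :|: C') (D :|: D') erefl HD2 _ Hnrep'.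
  + rewrite -Hn; apply: proper_card; apply/properP; split.
      by apply/subsetP=> z; rewrite !inE; case: (z \in C); case: (z \in C'); case: (z \in D); case: (z \in D').
    case/set0Pn: Hne' => z zCD.
    exists z; last by rewrite !inE; move: zCD; rewrite !inE; case/orP=> ->; rewrite ?orbT.
    by move: zCD; rewrite inE; case/orP => h; [apply: (subsetP sC') | apply: (subsetP sD')].
  + case/set0Pn: Hne' => z zCD; apply/set0Pn; exists z.
    by move: zCD; rewrite !inE; case/orP=> ->; rewrite ?orbT.
Qed.
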